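(* Each of the matroids $Q_6$, $P_6$ and $U_{3,6}$ is an excluded minor for the class $\mathcal{Z}$.
   Context: $\mathcal{Z}$ is the class of matroids $M$ such that for every $e\in E(M)$, $M\backslash e$ or $M/e$ is binary. $P_6$ is the six-element rank-3 matroid whose only non-spanning circuit is a single triangle. $Q_6$ is the six-element rank-3 matroid whose non-spanning circuits are exactly two triangles sharing one element. An excluded minor for a minor-closed class is a matroid not in the class all of whose proper minors are in the class. *)

(* Defs.v *)
(* Matroids on a ground set E : {set T} (T a finType),
   given by their rank function r : {set T} -> nat (only values on subsets
   of E matter). *)
From HB Require Import structures.
From mathcomp Require Import all_boot all_order all_algebra.
Set Implicit Arguments. Unset Strict Implicit. Unset Printing Implicit Defensive.

Section Matroids.
Variable T : finType.

Definition is_matroid (E : {set T}) (r : {set T} -> nat) : Prop :=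
  [/\ forall X : {set T}, X \subset E -> r X <= #|X|,
      forall X Y : {set T}, X \subset Y -> Y \subset E -> r X <= r Y
    & forall X Y : {set T}, X \subset E -> Y \subset E ->
        r (X :|: Y) + r (X :&: Y) <= r X + r Y].

Definition del_rank (r : {set T} -> nat) : {set T} -> nat := r.
Definition con_rank (r : {set T} -> nat) (e : T) : {set T} -> nat :=
  fun X => r (e |: X) - r [set e].

Definition minor_ground (E C D : {set T}) : {set T} := E :\: (C :|: D).
Definition minor_rank (r : {set T} -> nat) (C : {set T}) : {set T} -> nat :=
  fun X => r (X :|: C) - r C.

Definition binary (E : {set T}) (r : {set T} -> nat) : Prop :=
  exists n : nat, exists phi : T -> 'rV['F_2]_n,
    forall X : {set T}, X \subset E -> r X = \rank (\sum_(x in X) <<phi x>>)%MS.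

Definition classZ (E : {set T}) (r : {set T} -> nat) : Prop :=
  forall e, e \in E -> binary (E :\ e) (del_rank r) \/ binary (E :\ e) (con_rank r e).

Definition excluded_minor
    (P : {set T} -> ({set T} -> nat) -> Prop) (E : {set T}) (r : {set T} -> nat) : Prop :=
  [/\ is_matroid E r, ~ P E r &
      forall C D : {set T}, C \subset E -> D \subset E -> [disjoint C & D] ->
        C :|: D != set0 -> P (minor_ground E C D) (minor_rank r C)].
End Matroids.

Definition tri1 : {set 'I_6} := [set inord 0; inord 1; inord 2].
Definition tri2 : {set 'I_6} := [set inord 2; inord 3; inord 4].

Definition rank_U36 (X : {set 'I_6}) : nat := minn #|X| 3.
(* P_6: rank 3, only non-spanning circuit is the triangle {0,1,2}. *)
Definition rank_P6 (X : {set 'I_6}) : nat := if X == tri1 then 2 else minn #|X| 3.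
(* Q_6: rank 3, non-spanning circuits exactly {0,1,2} and {2,3,4}. *)
Definition rank_Q6 (X : {set 'I_6}) : nat :=
  if (X == tri1) || (X == tri2) then 2 else minn #|X| 3.

(* Main.v *)
Require Import Defs.
From HB Require Import structures.
From mathcomp Require Import all_boot all_order all_algebra.
Set Implicit Arguments. Unset Strict Implicit. Unset Printing Implicit Defensive.
Import GRing.Theory.

Open Scope ring_scope.

Lemma F2_cases (a : 'F_2) : a = 0 \/ a = 1.
Proof.
case: a => [[|[|k]]] Hk; [left|right|by []]; exact: val_inj.
Qed.

Lemma oppF2 n m (v : 'M['F_2]_(m, n)) : - v = v.
Proof.
apply/matrixP => i j; rewrite !mxE; case: (F2_cases (v i j)) => ->; [by rewrite oppr0|by apply/eqP].
Qed.

Lemma addF2K n m (v : 'M['F_2]_(m, n)) : v + v = 0.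
Proof. by rewrite -{1}(oppF2 v) addNr. Qed.

Lemma sub_adds1 n k (v w : 'rV['F_2]_n) (S : 'M['F_2]_(k, n)) :
  (v <= <<w>> + S)%MS = (v <= S)%MS || ((v + w)%R <= S)%MS.
Proof.
apply/idP/idP.
- move/sub_addsmxP=> [[u1 u2] /= ->].
  have : (u1 *m <<w>> <= w)%MS by rewrite -(genmxE w) submxMl.
  case/sub_rVP => a ->; have h2 : (u2 *m S <= S)%MS by rewrite submxMl.
  case: (F2_cases a) => ->; first by rewrite scale0r add0r h2.
  by rewrite scale1r addrAC addF2K add0r h2 orbT.
- case/orP => h.
  + exact: submx_trans h (addsmxSr _ _).
  + have -> : v = (v + w) + w by rewrite -addrA addF2K addr0.
    by rewrite addrC; apply: addmx_sub_adds; rewrite ?genmxE.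
Qed.

Lemma rank_adds1 n k (w : 'rV['F_2]_n) (S : 'M['F_2]_(k, n)) :
  \rank (<<w>> + S)%MS = (\rank S + ~~ (w <= S)%MS)%N.
Proof.
case hw: (w <= S)%MS.
  have h : (<<w>> <= S)%MS by rewrite genmxE.
  by rewrite addn0 (addsmx_idPr h).
have w0 : w != 0 by apply: contraFN hw => /eqP ->; rewrite sub0mx.
have := mxrank_sum_cap <<w>>%MS S; rewrite genmxE rank_rV w0.
have -> : \rank (<<w>> :&: S)%MS = 0%N.
  apply/eqP; rewrite mxrank_eq0; apply: contraFT hw => h.
  have h1 : (\rank (<<w>> :&: S)%MS = \rank <<w>>%MS)%N.
    apply/eqP; rewrite eqn_leq mxrankS ?capmxSl //= genmxE rank_rV w0.
    by rewrite lt0n mxrank_eq0.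
  have := mxrank_leqif_eq (capmxSl <<w>>%MS S); rewrite h1 => /leqif_refl.
  by case/andP => _ h2; rewrite -genmxE; exact: submx_trans h2 (capmxSr _ _).
by rewrite addn0 => ->; rewrite addnC.
Qed.

Definition code := (bool * bool * bool)%type.
Definition cz : code := (false, false, false).
Definition cxor (a b : code) : code :=
  (xorb a.1.1 b.1.1, xorb a.1.2 b.1.2, xorb a.2 b.2).
Definition dec (c : code) : 'rV['F_2]_3 :=
  \row_(i < 3) (nth false [:: c.1.1; c.1.2; c.2] i)%:R.

Lemma dec_xor a b : dec (cxor a b) = dec a + dec b.
Proof.
apply/rowP => i; rewrite !mxE.
case: a b => [[a1 a2] a3] [[b1 b2] b3].
by case: i => [[|[|[|i]]] Hi] //=; [case: a1; case: b1|case: a2; case: b2|case: a3; case: b3];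
  rewrite /= ?addr0 ?add0r //; apply/eqP.
Qed.

Definition ceq0 (a : code) := ~~ a.1.1 && ~~ a.1.2 && ~~ a.2.

Lemma dec_eq0 a : (dec a == 0) = ceq0 a.
Proof.
case: a => [[a1 a2] a3]; have -> : ceq0 (a1, a2, a3) = ((a1, a2, a3) == cz).
  by case: a1; case: a2; case: a3.
apply/eqP/eqP.
- move/rowP => h.
  have h0 := h ord0; have h1 := h (@Ordinal 3 1 isT); have h2 := h (@Ordinal 3 2 isT).
  rewrite !mxE /= in h0 h1 h2; clear h.
  by move: h0 h1 h2; case: a1; case: a2; case: a3 => //= /eqP.
- by case=> -> -> ->; apply/rowP => i; rewrite !mxE; case: i => [[|[|[|i]]] Hi].
Qed.

Fixpoint inspan (k : code) (s : seq code) : bool :=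
  if s is j :: s' then inspan k s' || inspan (cxor k j) s' else ceq0 k.

Fixpoint myrank (s : seq code) : nat :=
  if s is k :: s' then (myrank s' + ~~ inspan k s')%N else 0%N.

Lemma sub_span s : forall k,
  (dec k <= \sum_(j <- s) <<dec j>>)%MS = inspan k s.
Proof.
elim: s => [|j s IH] k; first by rewrite big_nil submx0 dec_eq0.
by rewrite big_cons sub_adds1 /= -dec_xor !IH.
Qed.

Lemma rank_span s : \rank (\sum_(j <- s) <<dec j>>)%MS = myrank s.
Proof.
elim: s => [|j s IH]; first by rewrite big_nil mxrank0.
by rewrite big_cons rank_adds1 sub_span IH.
Qed.

Section NoRep.
Variables (T : Type) (n : nat) (phi : T -> 'rV['F_2]_n).
Definition rkl (L : seq T) := \rank (\sum_(x <- L) <<phi x>>)%MS.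

Lemma rkl_cons x L : rkl (x :: L) = (rkl L + ~~ (phi x <= \sum_(y <- L) <<phi y>>)%MS)%N.
Proof. by rewrite /rkl big_cons rank_adds1. Qed.

Lemma rkl_le L : (rkl L <= size L)%N.
Proof.
elim: L => [|x L IH]; first by rewrite /rkl big_nil mxrank0.
by rewrite rkl_cons /= -[(size L).+1]addn1 leq_add //; case: (~~ _).
Qed.

Lemma rkl_in x L : rkl (x :: L) = rkl L -> (phi x <= \sum_(y <- L) <<phi y>>)%MS.
Proof.
rewrite rkl_cons; case: (phi x <= _)%MS => //= h.
by have := f_equal (fun k => k - rkl L)%N h; rewrite addKn subnn.
Qed.

Lemma rkl_out x L : rkl (x :: L) = (size L).+1 -> ~~ (phi x <= \sum_(y <- L) <<phi y>>)%MS.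
Proof.
rewrite rkl_cons; case: (phi x <= _)%MS => //= /eqP; rewrite addn0 => /eqP h.
by move: (rkl_le L); rewrite h ltnn.
Qed.

Lemma noU24d f a b c d :
  rkl [:: c; f; a; b] = 3%N -> rkl [:: f; a; b] = 3%N -> rkl [:: c; a; b] = 3%N ->
  rkl [:: c; f; a] = 3%N -> rkl [:: c; f; b] = 3%N ->
  rkl [:: d; f; a; b] = 3%N -> rkl [:: d; a; b] = 3%N ->
  rkl [:: d; f; a] = 3%N -> rkl [:: d; f; b] = 3%N -> rkl [:: c; d] = 2%N -> False.
Proof.
move=> h1 h2 h3 h4 h5 h6 h7 h8 h9 h10.
have m1 := rkl_in (etrans h1 (esym h2)).
have m2 := rkl_out h3; have m3 := rkl_out h4; have m4 := rkl_out h5.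
have n1 := rkl_in (etrans h6 (esym h2)).
have n2 := rkl_out h7; have n3 := rkl_out h8; have n4 := rkl_out h9.
have k := rkl_out h10.
move: m1 m2 m3 m4 n1 n2 n3 n4 k; rewrite !big_cons !big_nil !sub_adds1 !submx0.
set C := phi c; set D := phi d; set F := phi f; set A := phi a; set B := phi b.
have hC : (C + F + A + B == 0) -> C = F + A + B.
  by rewrite -!addrA addr_eq0 oppF2 => /eqP.
have hD : (D + F + A + B == 0) -> D = F + A + B.
  by rewrite -!addrA addr_eq0 oppF2 => /eqP.
move=> m1 m2 m3 m4 n1 n2 n3 n4.
have eC : C + F + A + B == 0.
  move: m1 m2 m3 m4; case: (C + F + A + B == 0) => //.
  by case: (C == 0); case: (C + B == 0); case: (C + A == 0); case: (C + A + B == 0);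
    case: (C + F == 0); case: (C + F + B == 0); case: (C + F + A == 0).
have eD : D + F + A + B == 0.
  move: n1 n2 n3 n4; case: (D + F + A + B == 0) => //.
  by case: (D == 0); case: (D + B == 0); case: (D + A == 0); case: (D + A + B == 0);
    case: (D + F == 0); case: (D + F + B == 0); case: (D + F + A == 0).
by rewrite (hC eC) (hD eD) addF2K eqxx orbT.
Qed.

Lemma noU24c a b c d :
  rkl [:: c; a; b] = 2%N -> rkl [:: a; b] = 2%N -> rkl [:: c; a] = 2%N -> rkl [:: c; b] = 2%N ->
  rkl [:: d; a; b] = 2%N -> rkl [:: d; a] = 2%N -> rkl [:: d; b] = 2%N ->
  rkl [:: c; d] = 2%N -> False.
Proof.
move=> h1 h2 h3 h4 h5 h6 h7 h8.
have m1 := rkl_in (etrans h1 (esym h2)).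
have m2 := rkl_out h3; have m3 := rkl_out h4.
have n1 := rkl_in (etrans h5 (esym h2)).
have n2 := rkl_out h6; have n3 := rkl_out h7.
have k := rkl_out h8.
move: m1 m2 m3 n1 n2 n3 k; rewrite !big_cons !big_nil !sub_adds1 !submx0.
set C := phi c; set D := phi d; set A := phi a; set B := phi b.
have hC : (C + A + B == 0) -> C = A + B.
  by rewrite -!addrA addr_eq0 oppF2 => /eqP.
have hD : (D + A + B == 0) -> D = A + B.
  by rewrite -!addrA addr_eq0 oppF2 => /eqP.
move=> m1 m2 m3 n1 n2 n3.
have eC : C + A + B == 0.
  move: m1 m2 m3; case: (C + A + B == 0) => //.
  by case: (C == 0); case: (C + B == 0); case: (C + A == 0).
have eD : D + A + B == 0.
  move: n1 n2 n3; case: (D + A + B == 0) => //.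
  by case: (D == 0); case: (D + B == 0); case: (D + A == 0).
by rewrite (hC eC) (hD eD) addF2K eqxx orbT.
Qed.
End NoRep.

Close Scope ring_scope.

Definition ord6 (i : nat) : 'I_6 := Ordinal (ltn_pmod i (isT : 0 < 6)).
Definition pS (X : {set 'I_6}) : nat -> bool := fun i => ord6 i \in X.

Lemma ord6_val (x : 'I_6) : ord6 (val x) = x.
Proof. by apply: val_inj; rewrite /= modn_small. Qed.

Lemma val_ord6 i : i < 6 -> val (ord6 i) = i.
Proof. by move=> h; rewrite /= modn_small. Qed.

Lemma enum_pS (X : {set 'I_6}) : [seq val x | x <- enum X] = filter (pS X) (iota 0 6).
Proof.
rewrite -val_enum_ord filter_map enumT; congr map.
by apply: eq_filter => x; rewrite /pS /= ord6_val.
Qed.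

Lemma card_pS (X : {set 'I_6}) : #|X| = count (pS X) (iota 0 6).
Proof. by rewrite cardE -(size_map val) enum_pS size_filter. Qed.

Lemma eqset_pS (X Y : {set 'I_6}) : (X == Y) = all (fun i => pS X i == pS Y i) (iota 0 6).
Proof.
apply/eqP/allP => [-> i _ //|h]; apply/setP => x.
have := h (val x); rewrite mem_iota /= ltn_ord => /(_ isT) /eqP.
by rewrite /pS ord6_val.
Qed.

Definition ext (rn : (nat -> bool) -> nat) :=
  forall p q, {in iota 0 6, p =1 q} -> rn p = rn q.

Fixpoint memn (i : nat) (l : seq nat) : bool :=
  if l is x :: l' then eqn i x || memn i l' else false.
Definition istri (l : seq nat) (p : nat -> bool) :=
  all (fun i => eqb (p i) (memn i l)) (iota 0 6).
Definition rU (p : nat -> bool) := minn (count p (iota 0 6)) 3.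
Definition rP (p : nat -> bool) := if istri [:: 0; 1; 2] p then 2 else rU p.
Definition rQ (p : nat -> bool) :=
  if istri [:: 0; 1; 2] p || istri [:: 2; 3; 4] p then 2 else rU p.

Lemma ext_istri l p q : {in iota 0 6, p =1 q} -> istri l p = istri l q.
Proof. by move=> h; apply: eq_in_all => i hi; rewrite h. Qed.
Lemma ext_rU : ext rU.
Proof. by move=> p q h; rewrite /rU (eq_in_count h). Qed.
Lemma ext_rP : ext rP.
Proof. by move=> p q h; rewrite /rP (ext_istri _ h) (ext_rU h). Qed.
Lemma ext_rQ : ext rQ.
Proof. by move=> p q h; rewrite /rQ !(ext_istri _ h) (ext_rU h). Qed.

Lemma tri1E : (fun X => X == tri1) =1 istri [:: 0; 1; 2] \o pS.
Proof.
move=> X; rewrite /= eqset_pS; apply: eq_in_all => i; rewrite mem_iota => /andP [_ hi].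
have -> : pS tri1 i = memn i [:: 0; 1; 2]; last by [].
rewrite /pS /tri1 !inE -!val_eqE /= !inordK // modn_small //.
by move: hi; do 6 (case: i => [|i] //).
Qed.

Lemma tri2E : (fun X => X == tri2) =1 istri [:: 2; 3; 4] \o pS.
Proof.
move=> X; rewrite /= eqset_pS; apply: eq_in_all => i; rewrite mem_iota => /andP [_ hi].
have -> : pS tri2 i = memn i [:: 2; 3; 4]; last by [].
rewrite /pS /tri2 !inE -!val_eqE /= !inordK // modn_small //.
by move: hi; do 6 (case: i => [|i] //).
Qed.

Lemma rU36E X : rank_U36 X = rU (pS X).
Proof. by rewrite /rank_U36 card_pS. Qed.
Lemma rP6E X : rank_P6 X = rP (pS X).
Proof. by rewrite /rank_P6 /rP (tri1E X) card_pS. Qed.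
Lemma rQ6E X : rank_Q6 X = rQ (pS X).
Proof. by rewrite /rank_Q6 /rQ (tri1E X) (tri2E X) card_pS. Qed.

Definition mdel (rn : (nat -> bool) -> nat) (pC : nat -> bool) (pX : nat -> bool) :=
  rn (fun i => pX i || pC i) - rn pC.
Definition mcon rn pC (e : nat) pX :=
  mdel rn pC (fun i => eqn i e || pX i) - mdel rn pC (fun i => eqn i e).

Definition unitc (k : nat) : code :=
  match k with 0 => (true, false, false) | 1 => (false, true, false)
  | 2 => (false, false, true) | _ => cz end.

Definition basis (r' : (nat -> bool) -> nat) (g : nat -> bool) : seq nat :=
  foldl (fun B i => if g i && (r' (fun j => j \in i :: B) > r' (fun j => j \in B))
                    then rcons B i else B) [::] (iota 0 6).

Definition stdcodes r' g : seq code :=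
  let B := basis r' g in
  map (fun x => if x \in B then unitc (index x B) else if g x then
     foldr cxor cz [seq unitc (index b B) | b <- B &
        r' (fun j => (j == x) || ((j \in B) && (j != b))) == size B]
     else cz) (iota 0 6).

Fixpoint bseq (n : nat) : seq (seq bool) :=
  if n is n'.+1 then [seq b :: l | b <- [:: false; true], l <- bseq n'] else [:: [::]].

Definition chk r' g : bool :=
  let cds := stdcodes r' g in
  all (fun l => all (fun i => nth false l i ==> g i) (iota 0 6) ==>
      (eqn (r' (nth false l)) (myrank (map (nth cz cds) (filter (nth false l) (iota 0 6))))))
    (bseq 6).

Fixpoint tseq (n : nat) : seq (seq nat) :=
  if n is n'.+1 then [seq b :: l | b <- [:: 0; 1; 2], l <- tseq n'] else [:: [::]].

Definition okZ rn : bool :=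
  all (fun t =>
    let lC := [seq eqn x 1 | x <- t] in let lD := [seq eqn x 2 | x <- t] in
    let pC := nth false lC in let pD := nth false lD in
    has (fun x => ~~ eqn x 0) t ==>
    all (fun e => (~~ pC e && ~~ pD e) ==>
       let g := fun i => ~~ pC i && ~~ pD i && ~~ eqn i e in
       chk (mdel rn pC) g || chk (mcon rn pC e) g) (iota 0 6)) (tseq 6).


Lemma bseq_mem n l : size l = n -> l \in bseq n.
Proof.
elim: n l => [|n IH] [|b l] //= [hs].
by case: b; rewrite !mem_cat (map_f _ (IH _ hs)) ?orbT.
Qed.

Lemma tseq_mem n t : size t = n -> all (fun x => x < 3) t -> t \in tseq n.
Proof.
elim: n t => [|n IH] [|b l] //= [hs] /andP [hb hl].
by move: hb; case: b => [|[|[|]]] // _; rewrite !mem_cat (map_f _ (IH _ hs hl)) ?orbT.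
Qed.

Lemma binary_ext (G : {set 'I_6}) (f f' : {set 'I_6} -> nat) :
  binary G f' -> (forall X : {set 'I_6}, X \subset G -> f X = f' X) -> binary G f.
Proof.
by move=> [n [phi hphi]] h; exists n, phi => X hX; rewrite h // hphi.
Qed.

Lemma nth_lS (p : nat -> bool) i : i \in iota 0 6 ->
  nth false (map p (iota 0 6)) i = p i.
Proof.
rewrite mem_iota add0n => /andP [_ hi].
by rewrite (nth_map 0) ?size_iota // nth_iota.
Qed.

Lemma chk_sound r' g (G : {set 'I_6}) : ext r' -> chk r' g ->
  (forall x, x \in G -> g (val x)) -> binary G (fun X => r' (pS X)).
Proof.
move=> hext hc hG; set cds := stdcodes r' g.
exists 3, (fun x => dec (nth cz cds (val x))) => X hX.
rewrite -big_enum /=.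
rewrite -(big_map (fun x => nth cz cds (val x)) xpredT (fun j => <<dec j>>%MS)).
rewrite rank_span.
have -> : [seq nth cz cds (val x) | x <- enum X] = map (nth cz cds) (map val (enum X)).
  by rewrite -map_comp.
rewrite enum_pS.
have hin : map (pS X) (iota 0 6) \in bseq 6 by apply: bseq_mem; rewrite size_map size_iota.
move/allP: hc => /(_ _ hin).
have he : {in iota 0 6, nth false (map (pS X) (iota 0 6)) =1 pS X}.
  by move=> i hi; rewrite nth_lS.
rewrite (eq_in_all (a2 := fun i => pS X i ==> g i)); last by move=> i hi /=; rewrite he.
have -> : all (fun i => pS X i ==> g i) (iota 0 6).
  apply/allP => i hi; apply/implyP => hx.
  have := hG _ (subsetP hX _ hx); rewrite val_ord6 //.
  by move: hi; rewrite mem_iota.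
rewrite implyTb (eq_in_filter he) (hext _ _ he).
by move/eqnP.
Qed.

Lemma pS_eq (e : 'I_6) i : i \in iota 0 6 -> (ord6 i == e) = eqn i (val e).
Proof. by rewrite mem_iota /= => hi; rewrite -val_eqE val_ord6. Qed.

Lemma ext_mdel rn pC : ext rn -> ext (mdel rn pC).
Proof.
move=> h p q hpq; rewrite /mdel; congr (_ - _); apply: h => i hi.
by rewrite hpq.
Qed.

Lemma ext_mcon rn pC e : ext rn -> ext (mcon rn pC e).
Proof.
move=> h p q hpq; rewrite /mcon; congr (_ - _); apply: ext_mdel => // i hi.
by rewrite hpq.
Qed.

Lemma okZ_sound rn (r : {set 'I_6} -> nat) : ext rn -> (forall X, r X = rn (pS X)) ->
  okZ rn -> forall C D : {set 'I_6}, C \subset [set: 'I_6] -> D \subset [set: 'I_6] ->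
  [disjoint C & D] -> C :|: D != set0 -> classZ (minor_ground [set: 'I_6] C D) (minor_rank r C).
Proof.
move=> hext hr hok C D _ _ hdis hne e he.
set t := map (fun i => if pS C i then 1 else if pS D i then 2 else 0) (iota 0 6).
have tin : t \in tseq 6.
  apply: tseq_mem; first by rewrite size_map size_iota.
  by apply/allP => x /mapP [i _ ->]; case: (pS C i); case: (pS D i).
set pC := nth false [seq eqn x 1 | x <- t].
set pD := nth false [seq eqn x 2 | x <- t].
have lCE : {in iota 0 6, pC =1 pS C}.
  move=> i hi; rewrite /pC -map_comp nth_lS //=.
  by case: (pS C i) => //; case: (pS D i).
have lDE : {in iota 0 6, pD =1 pS D}.
  move=> i hi; rewrite /pD -map_comp nth_lS //=.
  case hc: (pS C i) => //=; last by case: (pS D i).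
  by rewrite /pS (disjointFr hdis hc).
have hhas : has (fun x => ~~ eqn x 0) t.
  case/set0Pn: hne => x; rewrite inE => hx.
  apply/hasP; exists (if pS C (val x) then 1 else if pS D (val x) then 2 else 0).
    by apply/mapP; exists (val x) => //; rewrite mem_iota /=.
  by move: hx; rewrite /pS ord6_val; case/orP => ->; case: (x \in C).
have ival (x : 'I_6) : val x \in iota 0 6 by rewrite mem_iota /=.
move/allP: hok => /(_ t tin); cbv zeta; rewrite -/pC -/pD hhas implyTb.
move/allP => /(_ (val e) (ival e)).
move: he; rewrite /minor_ground !inE negb_or => /andP [/andP [heC heD] _].
rewrite lCE ?lDE // /pS ord6_val heC heD /=.
set g := fun i : nat => ~~ pC i && ~~ pD i && ~~ eqn i e.
have hG : forall x, x \in minor_ground [set: 'I_6] C D :\ e -> g (val x).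
  move=> x; rewrite /g; rewrite /minor_ground !inE negb_or lCE ?lDE // /pS ord6_val.
  by case/andP => hxe /andP [/andP [-> ->] _] /=; rewrite -val_eqE in hxe.
case/orP => hc.
- left; have hb := chk_sound (ext_mdel _ hext) hc hG.
  apply: (binary_ext hb) => X hX.
  rewrite /del_rank /minor_rank /mdel !hr; congr (_ - _); apply: hext => i hi.
    by rewrite /pS inE lCE.
  by rewrite lCE.
- right; have hb := chk_sound (ext_mcon _ _ hext) hc hG.
  apply: (binary_ext hb) => X hX.
  rewrite /con_rank /minor_rank /mcon /mdel !hr.
  congr (_ - _ - (_ - _)); apply: hext => i hi; rewrite ?lCE //.
  + by rewrite /pS !inE pS_eq // lCE.
  + by rewrite /pS !inE pS_eq // lCE.
Qed.


Lemma rk_of (G : {set 'I_6}) (f : {set 'I_6} -> nat) n (phi : 'I_6 -> 'rV['F_2]_n) :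
  (forall X : {set 'I_6}, X \subset G -> f X = \rank (\sum_(x in X) <<phi x>>)%MS) ->
  forall L, uniq L -> all (mem G) L -> rkl phi L = f [set:: L].
Proof.
move=> hb L hu hL; rewrite hb; last first.
  by apply/subsetP => x; rewrite inE => /(allP hL).
rewrite /rkl big_uniq //; apply: congr1; apply: eq_bigl => x; by rewrite inE.
Qed.

Definition rLd (rn : (nat -> bool) -> nat) (L : seq nat) := rn (fun i => ord6 i \in map ord6 L).
Definition rLc (rn : (nat -> bool) -> nat) (e : nat) (L : seq nat) :=
  rn (fun i => ord6 i \in map ord6 (e :: L)) - rn (fun i => ord6 i \in [:: ord6 e]).
Definition okd (rn : (nat -> bool) -> nat) e L t := [&& uniq (map ord6 L), ord6 e \notin map ord6 L & eqn (rLd rn L) t].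
Definition okc (rn : (nat -> bool) -> nat) e L t := [&& uniq (map ord6 L), ord6 e \notin map ord6 L & eqn (rLc rn e L) t].

Section NB.
Variables (rn : (nat -> bool) -> nat) (r : {set 'I_6} -> nat).
Hypotheses (hext : ext rn) (hr : forall X, r X = rn (pS X)).

Lemma allG e L : ord6 e \notin map ord6 L -> all (mem ([set: 'I_6] :\ ord6 e)) (map ord6 L).
Proof.
move=> h; apply/allP => x hx; rewrite /= !inE andbT.
by apply: contraNneq h => <-.
Qed.

Lemma okd_rk e n (phi : 'I_6 -> 'rV['F_2]_n) L t :
  (forall X : {set 'I_6}, X \subset [set: 'I_6] :\ ord6 e ->
     del_rank r X = \rank (\sum_(x in X) <<phi x>>)%MS) ->
  okd rn e L t -> rkl phi (map ord6 L) = t.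
Proof.
move=> hb /and3P [hu hn /eqnP ht].
rewrite (rk_of hb hu (allG hn)) /del_rank hr -ht /rLd; apply: hext => i _.
by rewrite /pS inE.
Qed.

Lemma okc_rk e n (phi : 'I_6 -> 'rV['F_2]_n) L t :
  (forall X : {set 'I_6}, X \subset [set: 'I_6] :\ ord6 e ->
     con_rank r (ord6 e) X = \rank (\sum_(x in X) <<phi x>>)%MS) ->
  okc rn e L t -> rkl phi (map ord6 L) = t.
Proof.
move=> hb /and3P [hu hn /eqnP ht].
rewrite (rk_of hb hu (allG hn)) /con_rank !hr -ht /rLc; congr (_ - _); apply: hext => i _.
  by rewrite /pS !inE.
by rewrite /pS !inE.
Qed.

Lemma notZ e f a b c d a2 b2 c2 d2 :
  okd rn e [:: c; f; a; b] 3 -> okd rn e [:: f; a; b] 3 -> okd rn e [:: c; a; b] 3 ->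
  okd rn e [:: c; f; a] 3 -> okd rn e [:: c; f; b] 3 ->
  okd rn e [:: d; f; a; b] 3 -> okd rn e [:: d; a; b] 3 ->
  okd rn e [:: d; f; a] 3 -> okd rn e [:: d; f; b] 3 -> okd rn e [:: c; d] 2 ->
  okc rn e [:: c2; a2; b2] 2 -> okc rn e [:: a2; b2] 2 -> okc rn e [:: c2; a2] 2 ->
  okc rn e [:: c2; b2] 2 ->
  okc rn e [:: d2; a2; b2] 2 -> okc rn e [:: d2; a2] 2 -> okc rn e [:: d2; b2] 2 ->
  okc rn e [:: c2; d2] 2 -> ~ classZ [set: 'I_6] r.
Proof.
move=> h1 h2 h3 h4 h5 h6 h7 h8 h9 h10 k1 k2 k3 k4 k5 k6 k7 k8 hZ.
case: (hZ (ord6 e) (in_setT _)) => [[n [phi hb]]|[n [phi hb]]].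
- apply: (@noU24d _ _ phi (ord6 f) (ord6 a) (ord6 b) (ord6 c) (ord6 d));
  [exact: (okd_rk hb h1)|exact: (okd_rk hb h2)|exact: (okd_rk hb h3)|exact: (okd_rk hb h4)
  |exact: (okd_rk hb h5)|exact: (okd_rk hb h6)|exact: (okd_rk hb h7)|exact: (okd_rk hb h8)
  |exact: (okd_rk hb h9)|exact: (okd_rk hb h10)].
- apply: (@noU24c _ _ phi (ord6 a2) (ord6 b2) (ord6 c2) (ord6 d2));
  [exact: (okc_rk hb k1)|exact: (okc_rk hb k2)|exact: (okc_rk hb k3)|exact: (okc_rk hb k4)
  |exact: (okc_rk hb k5)|exact: (okc_rk hb k6)|exact: (okc_rk hb k7)|exact: (okc_rk hb k8)].
Qed.

Definition matchk : bool :=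
  all (fun lX => let pX := nth false lX in (rn pX <= count pX (iota 0 6)) &&
    all (fun lY => let pY := nth false lY in
      (all (fun i => pX i ==> pY i) (iota 0 6) ==> (rn pX <= rn pY)) &&
      (rn (fun i => pX i || pY i) + rn (fun i => pX i && pY i) <= rn pX + rn pY))
    (bseq 6)) (bseq 6).

Lemma mat_sound : matchk -> is_matroid [set: 'I_6] r.
Proof.
move=> hm.
have hin (X : {set 'I_6}) : map (pS X) (iota 0 6) \in bseq 6.
  by apply: bseq_mem; rewrite size_map size_iota.
have he (X : {set 'I_6}) : {in iota 0 6, nth false (map (pS X) (iota 0 6)) =1 pS X}.
  by move=> i hi; rewrite nth_lS.
split.
- move=> X _; move/allP: hm => /(_ _ (hin X)) /andP [h1 _].
  by rewrite hr card_pS -(hext (he X)) -(eq_in_count (he X)).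
- move=> X Y hXY _; move/allP: hm => /(_ _ (hin X)) /andP [_ /allP /(_ _ (hin Y)) /andP [h _]].
  move: h; rewrite (eq_in_all (a2 := fun i => pS X i ==> pS Y i)); last first.
    by move=> i hi /=; rewrite !he.
  have -> : all (fun i => pS X i ==> pS Y i) (iota 0 6).
    by apply/allP => i _; apply/implyP => /(subsetP hXY).
  by rewrite implyTb !hr -(hext (he X)) -(hext (he Y)).
- move=> X Y _ _; move/allP: hm => /(_ _ (hin X)) /andP [_ /allP /(_ _ (hin Y)) /andP [_ h]].
  rewrite !hr -(hext (he X)) -(hext (he Y)).
  rewrite (@hext (pS (X :|: Y)) (fun i => nth false (map (pS X) (iota 0 6)) i || nth false (map (pS Y) (iota 0 6)) i)); last first.
    by move=> i hi; rewrite /pS inE !he.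
  rewrite (@hext (pS (X :&: Y)) (fun i => nth false (map (pS X) (iota 0 6)) i && nth false (map (pS Y) (iota 0 6)) i)) //.
  by move=> i hi; rewrite /pS inE !he.
Qed.
End NB.

Lemma okU : okZ rU. Proof. vm_compute. reflexivity. Qed.
Lemma okP : okZ rP. Proof. vm_compute. reflexivity. Qed.
Lemma okQ : okZ rQ. Proof. vm_compute. reflexivity. Qed.

Theorem lemma2p11 :
  [/\ excluded_minor (@classZ _) [set: 'I_6] rank_Q6,
      excluded_minor (@classZ _) [set: 'I_6] rank_P6
    & excluded_minor (@classZ _) [set: 'I_6] rank_U36].
Proof.
split; split.
- by apply: (mat_sound ext_rQ rQ6E); vm_compute.
- by apply: (@notZ _ _ ext_rQ rQ6E 0 4 1 5 2 3 1 3 4 5); vm_compute.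
- exact: (okZ_sound ext_rQ rQ6E okQ).
- by apply: (mat_sound ext_rP rP6E); vm_compute.
- by apply: (@notZ _ _ ext_rP rP6E 5 2 3 4 0 1 0 1 2 3); vm_compute.
- exact: (okZ_sound ext_rP rP6E okP).
- by apply: (mat_sound ext_rU rU36E); vm_compute.
- by apply: (@notZ _ _ ext_rU rU36E 0 1 2 3 4 5 1 2 3 4); vm_compute.
- exact: (okZ_sound ext_rU rU36E okU).
Qed.
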